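(* Let $1\le k\le n$, let $a_\rho$ ($\rho\in\Sigma(k,n)$) be real numbers and let $\lambda_0,\dots,\lambda_n\ge0$ be real numbers. Define the symmetric matrix $M=(m_{\rho\tilde\rho})_{\rho,\tilde\rho\in\Sigma(k,n)}$ by $$m_{\rho\tilde\rho}=\begin{cases}\lambda_{\rho^*}\big(\lambda_0+\sum_{i=1}^k\lambda_{\rho(i)}\big)&\text{if }\rho=\tilde\rho,\\ (-1)^{s+t}\,\lambda_{\rho^*}\lambda_{\rho(s)}&\text{if }\mathcal R(\rho)\cap\mathcal R(\tilde\rho^* )=\{\rho(s)\},\ \mathcal R(\rho^* )\cap\mathcal R(\tilde\rho)=\{\tilde\rho(t)\},\\ 0&\text{otherwise.}\end{cases}$$ Then $$\sum_{\rho,\tilde\rho\in\Sigma(k,n)}a_\rho a_{\tilde\rho}m_{\rho\tilde\rho}=\lambda_0\sum_{\rho\in\Sigma(k,n)}a_\rho^2\lambda_{\rho^*}+\langle\theta,\theta\rangle_{\mathrm{Alt}^{n-k+1}\mathbb{R}^n},\qquad \theta=\sum_{\rho\in\Sigma(k,n)}(-1)^{\sigma(\rho)}a_\rho\sum_{i=1}^k\sqrt{\lambda_{\rho^*}\lambda_{\rho(i)}}\;\mu'_{\rho^*}\wedge\mu'_{\rho(i)}.$$ In particular the left-hand side is nonnegative.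
   Context: $\Sigma(k,n)$ is the set of strictly increasing maps $\{1,\dots,k\}\to\{1,\dots,n\}$; for $\rho\in\Sigma(k,n)$, $\rho^*$ is the increasing map with range $\{1,\dots,n\}\setminus\mathcal R(\rho)$; $s,t\in\{1,\dots,k\}$. For a set $S$ of indices, $\lambda_S=\prod_{i\in S}\lambda_i$, and $\lambda_{\rho^*}=\lambda_{\mathcal R(\rho^* )}$. $\sigma(\rho)$ is the number of inversions of the sequence $\rho(1),\dots,\rho(k),\rho^*(1),\dots,\rho^*(n-k)$. $\mu_1,\dots,\mu_n$ is an orthonormal basis of $\mathbb{R}^n$, $\mu'_1,\dots,\mu'_n$ its dual basis, $\mu'_{\rho^*}=\mu'_{\rho^*(1)}\wedge\cdots\wedge\mu'_{\rho^*(n-k)}$, and the inner product on $\mathrm{Alt}^m\mathbb{R}^n$ is $\langle\omega,\eta\rangle=\sum_{\tau}\omega(\mu_{\tau(1)},\dots,\mu_{\tau(m)})\,\eta(\mu_{\tau(1)},\dots,\mu_{\tau(m)})$, summed over strictly increasing $\tau:\{1,\dots,m\}\to\{1,\dots,n\}$. *)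

(* Defs.v *)
From HB Require Import structures.
From mathcomp Require Import all_boot all_order all_algebra.
Set Implicit Arguments. Unset Strict Implicit. Unset Printing Implicit Defensive.
Import Order.TTheory GRing.Theory Num.Theory.
Local Open Scope ring_scope.

(* Indices are 0-based: position s : 'I_k stands for s+1, and j : 'I_n
   stands for the index j+1 in {1,...,n}. *)

Definition incrb k n (f : {ffun 'I_k -> 'I_n}) : bool :=
  [forall i : 'I_k, forall j : 'I_k, (i < j)%N ==> (f i < f j)%N].

Definition Sigma k n := {f : {ffun 'I_k -> 'I_n} | incrb f}.

Definition rng k n (r : Sigma k n) : {set 'I_n} := [set val r i | i : 'I_k].

(* rho^* as the increasing sequence rho^*(1), ..., rho^*(n-k) *)
Definition rstar k n (r : Sigma k n) : seq 'I_n := enum (~: rng r).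

Definition lamS (R : comNzRingType) n (lam : 'I_n -> R) (S : {set 'I_n}) : R :=
  \prod_(j in S) lam j.

Definition lamstar (R : comNzRingType) k n (lam : 'I_n -> R) (r : Sigma k n) : R :=
  lamS lam (~: rng r).

Definition inversions (s : seq nat) : nat :=
  (\sum_(i < size s) \sum_(j < size s | (i < j)%N) (nth 0 s j < nth 0 s i))%N.

Definition sigma k n (r : Sigma k n) : nat :=
  inversions (map (@nat_of_ord n) (map (val r) (enum 'I_k) ++ rstar r)).

Definition mentry (R : comNzRingType) k n (lam0 : R) (lam : 'I_n -> R)
    (r rt : Sigma k n) : R :=
  if r == rt then lamstar lam r * (lam0 + \sum_(i < k) lam (val r i))
  else match [pick st : 'I_k * 'I_k |
                (rng r :&: ~: rng rt == [set val r st.1])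
                && (~: rng r :&: rng rt == [set val rt st.2])] with
       | Some st => (-1) ^+ (st.1 + st.2)%N * lamstar lam r * lam (val r st.1)
       | None => 0
       end.

(* dual basis mu'_i of the basis given by the rows mu_i = row i B of B *)
Definition dualb (R : fieldType) n (B : 'M[R]_n) (i : 'I_n) : 'rV[R]_n -> R :=
  fun v => (v *m invmx B) 0 i.

(* alternating m-forms on R^n, as functions of m vectors *)
Definition altform (R : nzRingType) n m := ('I_m -> 'rV[R]_n) -> R.

Definition wedge (R : comNzRingType) n m (fs : seq ('rV[R]_n -> R)) : altform R n m :=
  fun v => \det (\matrix_(a < m, b < m) (nth (fun _ => 0) fs a) (v b)).

Definition altdot (R : comNzRingType) n m (B : 'M[R]_n) (w e : altform R n m) : R :=
  \sum_(t : Sigma m n) w (fun b => row (val t b) B) * e (fun b => row (val t b) B).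

Definition theta (R : rcfType) k n (B : 'M[R]_n) (lam : 'I_n -> R)
    (a : Sigma k n -> R) : altform R n (n - k + 1)%N :=
  fun v => \sum_(r : Sigma k n) (-1) ^+ sigma r * a r *
     \sum_(i < k) Num.sqrt (lamstar lam r * lam (val r i)) *
        @wedge _ n (n - k + 1)%N (map (dualb B) (rcons (rstar r) (val r i))) v.

(* Main.v *)
Require Import Defs.
From HB Require Import structures.
From mathcomp Require Import all_boot all_order all_algebra zify ring.
Set Implicit Arguments. Unset Strict Implicit. Unset Printing Implicit Defensive.
Import Order.TTheory GRing.Theory Num.Theory.

Lemma inv_cons (x : nat) (s : seq nat) :
  inversions (x :: s) = (count (fun y => y < x) s + inversions s)%N.
Proof.
rewrite /inversions /= big_ord_recl /=; congr (_ + _)%N.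
  rewrite big_mkcond /= big_ord_recl /= -sum1_count /=.
  rewrite add0n (big_nth 0) big_mkord [RHS]big_mkcond; apply: eq_bigr => j _.
  by rewrite add0n; case: (_ < _)%N.
apply: eq_bigr => i _; rewrite big_mkcond big_ord_recl /= add0n.
rewrite [RHS]big_mkcond /=; apply: eq_bigr => j _.
by rewrite /bump /= !add1n ltnS.
Qed.

Lemma inv_cat (s1 s2 : seq nat) :
  inversions (s1 ++ s2) =
  (inversions s1 + inversions s2 + \sum_(x <- s1) count (fun y => y < x) s2)%N.
Proof.
elim: s1 => [|x s1 IH] /=; first by rewrite big_nil /inversions /= big_ord0 addn0.
rewrite !inv_cons IH big_cons count_cat; lia.
Qed.

Lemma inv_sorted (s : seq nat) : sorted ltn s -> inversions s = 0%N.
Proof.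
elim: s => [|x s IH] /=; first by rewrite /inversions big_ord0.
move=> hp; rewrite inv_cons IH; last exact: path_sorted hp.
rewrite addn0; apply/eqP; rewrite -leqn0 leqNgt -has_count; apply/hasPn => y hy.
have := order_path_min ltn_trans hp; move/allP/(_ y hy) => /= h.
by rewrite ltnNge ltnW.
Qed.

Definition ltO n : rel 'I_n := fun u v => (val u < val v)%N.

Lemma ltO_trans n : transitive (@ltO n).
Proof. move=> ???; exact: ltn_trans. Qed.
Lemma ltO_irr n : irreflexive (@ltO n).
Proof. move=> ?; exact: ltnn. Qed.

Lemma sorted_enum_ord m : sorted (@ltO m) (enum 'I_m).
Proof. by have := iota_ltn_sorted 0 m; rewrite -val_enum_ord sorted_map. Qed.

Lemma sorted_enum_set n (A : {set 'I_n}) : sorted (@ltO n) (enum A).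
Proof.
rewrite /enum_mem -enumT; apply: sorted_filter; [exact: ltO_trans| exact: sorted_enum_ord].
Qed.

Lemma sig_mono k n (r : Sigma k n) (i j : 'I_k) : (i < j)%N -> (val r i < val r j)%N.
Proof. by move=> h; have /forallP/(_ i)/forallP/(_ j)/implyP := valP r; apply. Qed.

Lemma sig_ltn k n (r : Sigma k n) (i j : 'I_k) : (val r i < val r j)%N = (i < j)%N.
Proof.
apply/idP/idP; last exact: sig_mono.
move=> h; case: (ltngtP i j) => // [hji|/val_inj hij].
  by have := sig_mono r hji; rewrite ltnNge ltnW.
by rewrite hij ltnn in h.
Qed.

Lemma sig_inj k n (r : Sigma k n) : injective (val r).
Proof.
move=> i j h; apply/eqP; case: (ltngtP i j) => [hij|hij|//].
  by have := sig_mono r hij; rewrite h ltnn.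
by have := sig_mono r hij; rewrite h ltnn.
by move=> /val_inj ->.
Qed.

Lemma card_rng k n (r : Sigma k n) : #|rng r| = k.
Proof. by rewrite /rng card_imset ?card_ord //; exact: sig_inj. Qed.

Lemma sig_seq_sorted k n (r : Sigma k n) : sorted (@ltO n) (map (val r) (enum 'I_k)).
Proof.
apply: (homo_sorted (e := @ltO k)); last exact: sorted_enum_ord.
by move=> i j; apply: sig_mono.
Qed.

Lemma mem_sig_seq k n (r : Sigma k n) x : (x \in map (val r) (enum 'I_k)) = (x \in rng r).
Proof.
apply/mapP/imsetP => [[i _ ->]|[i _ ->]]; exists i => //; by rewrite mem_enum.
Qed.

Lemma sig_uniq k n (r r' : Sigma k n) : rng r = rng r' -> r = r'.
Proof.
move=> h.
have e : map (val r) (enum 'I_k) = map (val r') (enum 'I_k).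
  apply: (irr_sorted_eq (@ltO_trans n) (@ltO_irr n)); try exact: sig_seq_sorted.
  by move=> x; rewrite !mem_sig_seq h.
apply: val_inj; apply/ffunP => i.
have := congr1 (fun s => nth (val r i) s i) e.
by rewrite !(nth_map i) -?enumT ?size_enum_ord ?nth_ord_enum.
Qed.

Lemma sig_exists m n (A : {set 'I_n}) (x0 : 'I_n) :
  #|A| = m -> exists t : Sigma m n, rng t = A.
Proof.
move=> hA.
pose f := [ffun b : 'I_m => nth x0 (enum A) b].
have hf : incrb f.
  apply/forallP => i; apply/forallP => j; apply/implyP => hij; rewrite !ffunE.
  apply: (sorted_ltn_nth (@ltO_trans n) x0 (sorted_enum_set A)) => //;
    by rewrite inE -cardE hA.
exists (exist _ f hf); apply/setP => x; rewrite /rng /=.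
apply/imsetP/idP => [[b _ ->]|hx].
  by rewrite ffunE -mem_enum mem_nth // -cardE hA.
have hi : (index x (enum A) < m)%N by rewrite -hA cardE index_mem mem_enum.
by exists (Ordinal hi) => //; rewrite ffunE nth_index // mem_enum.
Qed.

Local Open Scope ring_scope.
Lemma count_rng (R : nzRingType) m n (A : {set 'I_n}) (x0 : 'I_n) :
  #|A| = m -> \sum_(t : Sigma m n) ((A == rng t)%:R : R) = 1.
Proof.
move=> hA; have [t0 ht0] := sig_exists x0 hA.
rewrite (bigD1 t0) //= ht0 eqxx big1 ?addr0 // => t ht.
case: eqP => // h; case/eqP: ht; apply: sig_uniq; by rewrite -h.
Qed.

Lemma lift_ltn N (p : 'I_N.+1) (a b : 'I_N) : (lift p a < lift p b)%N = (a < b)%N.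
Proof.
rewrite /= /bump; case: (leqP p a) => ha; case: (leqP p b) => hb /=; lia.
Qed.

Lemma count_geq N p : (p <= N)%N -> count (fun b => p <= b)%N (iota 0 N) = (N - p)%N.
Proof.
elim: N => [|N IH] hp; first by case: p hp.
rewrite -addn1 iotaD count_cat /= add0n addn0.
case: (ltngtP p N.+1) hp => // [hpN|->] _.
  have hpN' : (p <= N)%N by [].
  rewrite IH // hpN' /=; lia.
rewrite ltnn addn0.
have -> : count (fun b => N.+1 <= b)%N (iota 0 N) = 0%N.
  apply/eqP; rewrite -leqn0 leqNgt -has_count; apply/hasPn => x.
  by rewrite mem_iota add0n => /andP [_ h]; rewrite -ltnNge ltnS ltnW.
lia.
Qed.


Lemma sgn_eq (R : nzRingType) (a b c d : nat) : (a + b = c + d)%N ->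
  (-1) ^+ a * (-1) ^+ b = (-1) ^+ c * (-1) ^+ d :> R.
Proof. by move=> h; rewrite -!exprD h. Qed.

Lemma sgn_sq (R : nzRingType) (a : nat) : (-1) ^+ a * (-1) ^+ a = 1 :> R.
Proof. by rewrite -exprD addnn -mul2n exprM sqrrN expr1n expr1n. Qed.

Lemma E_rcons (R : comNzRingType) n m (l : seq 'I_n) (y : 'I_n) (t : 'I_m -> 'I_n) :
  m = (size l).+1 -> sorted (@ltO n) l -> y \notin l ->
  (forall a b : 'I_m, (a < b)%N -> (t a < t b)%N) ->
  (forall x, (x \in rcons l y) = [exists b, t b == x]) ->
  \det (\matrix_(a < m, b < m) ((t b == nth y (rcons l y) a)%:R : R))
    = (-1) ^+ count (fun x : 'I_n => (y < x)%N) l.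
Proof.
move=> hm hl hy ht hmem; subst m.
have tinj : injective t.
  move=> a b hab; apply/eqP; case: (ltngtP a b) => [h|h|/val_inj -> //].
    by have := ht _ _ h; rewrite hab ltnn.
  by have := ht _ _ h; rewrite hab ltnn.
have [p /eqP hp] : exists p, t p == y.
  by apply/existsP; rewrite -hmem mem_rcons mem_head.
have hl2 : l = map (t \o lift p) (enum 'I_(size l)).
  apply: (irr_sorted_eq (@ltO_trans n) (@ltO_irr n)) => //.
    apply: (homo_sorted (e := @ltO (size l))); last exact: sorted_enum_ord.
    by move=> a b hab; apply: ht; rewrite lift_ltn.
  move=> x; apply/idP/mapP => [hx|[b _ ->]].
    have : x \in rcons l y by rewrite mem_rcons inE hx orbT.
    rewrite hmem => /existsP [b /eqP hb].
    case: (unliftP p b) => [b' hb'|hb']; last first.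
      by move: hx; rewrite -hb hb' hp (negbTE hy).
    by exists b'; rewrite ?mem_enum //= -hb hb'.
  have : t (lift p b) \in rcons l y by rewrite hmem; apply/existsP; exists (lift p b).
  rewrite mem_rcons inE => /orP [/eqP h|//].
  by move: h; rewrite -hp => /tinj/eqP; rewrite eq_sym (negbTE (neq_lift p b)).
rewrite (expand_det_row _ ord_max) (bigD1 p) //= big1 ?addr0; last first.
  move=> b hb; rewrite mxE nth_rcons ltnn eqxx.
  case: eqP => [h|]; last by rewrite mul0r.
  by move: hb; rewrite -hp in h; rewrite (tinj _ _ h) eqxx.
rewrite mxE nth_rcons ltnn eqxx hp eqxx mul1r /cofactor.
have -> : row' ord_max (col' p (\matrix_(a, b) ((t b == nth y (rcons l y) a)%:R : R)))
   = 1%:M.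
  apply/matrixP => a b; rewrite !mxE /= /bump.
  have ha : (a < size l)%N by [].
  rewrite leqNgt ha add0n nth_rcons ha.
  have {2}-> : l = map (t \o lift p) (enum 'I_(size l)) by [].
  rewrite (nth_map a) ?size_enum_ord // nth_ord_enum /=.
  have -> : (t (lift p b) == t (lift p a)) = (a == b).
    apply/eqP/eqP => [/tinj/lift_inj -> //|-> //].
  by [].
rewrite det1 mulr1.
have -> : count (fun x : 'I_n => (y < x)%N) l = (size l - p)%N.
  rewrite {1}hl2 count_map -hp.
  have -> : count (preim (t \o lift p) (fun x : 'I_n => (t p < x)%N)) (enum 'I_(size l))
     = count (fun b : 'I_(size l) => (p <= b)%N) (enum 'I_(size l)).
    apply: eq_count => b /=.
    have -> : (t p < t (lift p b))%N = (p < lift p b)%N.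
      apply/idP/idP => h; last exact: ht.
      case: (ltngtP p (lift p b)) => // [h'|/val_inj h'].
        by have := ht _ _ h'; rewrite ltnNge ltnW.
      by move: h; rewrite -h' ltnn.
    rewrite /= /bump; case: (leqP p b) => hb /=.
      by rewrite add1n ltnS.
    by rewrite add0n ltnNge ltnW.
  have -> : count (fun b : 'I_(size l) => (p <= b)%N) (enum 'I_(size l))
     = count (fun x => p <= x)%N (map val (enum 'I_(size l))) by rewrite count_map.
  rewrite val_enum_ord count_geq //.
  by rewrite -ltnS.
have hpl : (p <= size l)%N by rewrite -ltnS.
have -> : (@ord_max (size l) + p = (size l - p) + (p + p))%N by rewrite /=; lia.
by rewrite exprD [X in _ * X]exprD sgn_sq mulr1.
Qed.

Lemma E_zero (R : comNzRingType) n m (L : seq 'I_n) (y : 'I_n) (t : 'I_m -> 'I_n) (a0 : 'I_m) :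
  (forall b, t b != nth y L a0) ->
  \det (\matrix_(a < m, b < m) ((t b == nth y L a)%:R : R)) = 0.
Proof.
move=> h; rewrite (expand_det_row _ a0) big1 // => b _.
by rewrite mxE (negbTE (h b)) mul0r.
Qed.

Local Close Scope ring_scope.
Definition Dset k n (r : Sigma k n) (i : 'I_k) : {set 'I_n} := rng r :\ val r i.

Lemma rng_val k n (r : Sigma k n) i : val r i \in rng r.
Proof. exact: imset_f. Qed.

Lemma D_eq_ij k n (r : Sigma k n) i j : (Dset r i == Dset r j) = (i == j).
Proof.
apply/eqP/eqP => [h|-> //].
have : val r i \notin Dset r j by rewrite -h !inE eqxx.
by rewrite !inE rng_val andbT negbK => /eqP; apply: sig_inj.
Qed.

Definition Pst k n (r rt : Sigma k n) (st : 'I_k * 'I_k) : bool :=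
  (rng r :&: ~: rng rt == [set val r st.1])
  && (~: rng r :&: rng rt == [set val rt st.2]).

Lemma D_off k n (r r' : Sigma k n) i j : r != r' ->
  (Dset r i == Dset r' j) = Pst r r' (i, j).
Proof.
move=> hne; rewrite /Pst /=; apply/eqP/andP => [h|[/eqP h1 /eqP h2]].
  set x := val r i; set x' := val r' j.
  have hr z : (z \in rng r) = (z == x) || (z \in Dset r i).
    rewrite !inE; case: (eqVneq z x) => [->|] //=; by rewrite rng_val.
  have hr' z : (z \in rng r') = (z == x') || (z \in Dset r i).
    rewrite h !inE; case: (eqVneq z x') => [->|] //=; by rewrite rng_val.
  have hx : x \notin Dset r i by rewrite !inE eqxx.
  have hx' : x' \notin Dset r i by rewrite h !inE eqxx.
  have hxx : x != x'.
    apply/eqP => exx; case/eqP: hne; apply: sig_uniq; apply/setP => z.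
    by rewrite hr hr' exx.
  split; apply/eqP/setP => z; rewrite !inE hr hr';
  (have c1 : (z == x) ==> (z \notin Dset r i) by apply/implyP => /eqP ->);
  (have c2 : (z == x') ==> (z \notin Dset r i) by apply/implyP => /eqP ->);
  (have c3 : (z == x) ==> (z != x') by apply/implyP => /eqP ->);
  move: c1 c2 c3; case: (z == x); case: (z == x'); case: (z \in Dset r i) => //.
have f1 z : (z \in rng r) && (z \notin rng r') = (z == val r i).
  by move/setP: h1 => /(_ z); rewrite !inE.
have f2 z : (z \notin rng r) && (z \in rng r') = (z == val r' j).
  by move/setP: h2 => /(_ z); rewrite !inE.
apply/setP => z; rewrite !inE; move: (f1 z) (f2 z).
by case: (z \in rng r); case: (z \in rng r') => /= <- <-.
Qed.

Lemma card_D k n (r : Sigma k n) i : #|Dset r i| = (k - 1)%N.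
Proof. have := cardsD1 (val r i) (rng r); rewrite rng_val card_rng /Dset; move: #|_| => X /=; lia. Qed.

Lemma card_CD k n (r : Sigma k n) i : (1 <= k)%N -> (k <= n)%N ->
  #|~: Dset r i| = (n - k + 1)%N.
Proof.
move=> h1 h2; have := cardsC (Dset r i); rewrite card_D card_ord; move: #|~: _| => X; lia.
Qed.

Lemma size_rstar k n (r : Sigma k n) : (k <= n)%N -> size (rstar r) = (n - k)%N.
Proof.
move=> h; rewrite /rstar -cardE; have := cardsC (rng r); rewrite card_rng card_ord; move: #|~: rng r| => X; lia.
Qed.

Lemma memL k n (r : Sigma k n) i x :
  (x \in rcons (rstar r) (val r i)) = (x \in ~: Dset r i).
Proof. by rewrite mem_rcons inE mem_enum !inE negb_and negbK. Qed.

Local Open Scope ring_scope.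

Definition Emat (R : comNzRingType) n m (L : seq 'I_n) (y : 'I_n) (t : Sigma m n) : R :=
  \det (\matrix_(a < m, b < m) ((val t b == nth y L a)%:R : R)).

Lemma wedge_E (R : fieldType) n m (B : 'M[R]_n) (hB : B *m B^T = 1%:M)
   (L : seq 'I_n) (y : 'I_n) (t : Sigma m n) : size L = m ->
  @wedge R n m (map (dualb B) L) (fun b => row (val t b) B) = Emat R L y t.
Proof.
move=> hL; rewrite /wedge /Emat; congr (\det _); apply/matrixP => a b; rewrite !mxE.
have [hu _] := mulmx1_unit hB.
rewrite (nth_map y) ?hL // /dualb -row_mul mulmxV // !mxE.
by rewrite eq_sym.
Qed.

Lemma E_val (R : comNzRingType) k n (r : Sigma k n) i (t : Sigma (n - k + 1) n) :
  (1 <= k)%N -> (k <= n)%N ->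
  Emat R (rcons (rstar r) (val r i)) (val r i) t =
  if ~: Dset r i == rng t then (-1) ^+ count (fun x : 'I_n => (val r i < x)%N) (rstar r)
  else 0.
Proof.
move=> h1 h2; rewrite /Emat; case: ifP => [/eqP hD|hD].
  apply: E_rcons.
  - by rewrite size_rstar // addn1.
  - exact: sorted_enum_set.
  - by rewrite mem_enum !inE rng_val.
  - by move=> a b; apply: sig_mono.
  - move=> x; rewrite memL hD; apply/imsetP/existsP => [[b _ ->]|[b /eqP <-]].
      by exists b.
    by exists b.
have : ~~ (~: Dset r i \subset rng t).
  apply/negP => hs; move: hD; rewrite eqEcard hs /= card_CD //.
  by rewrite card_rng leqnn.
case/subsetPn => x hx hxt.
have hi : (index x (rcons (rstar r) (val r i)) < n - k + 1)%N.
  by rewrite -(size_rstar r h2) addn1 -(size_rcons _ (val r i)) index_mem memL.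
apply: (@E_zero R n (n - k + 1) _ (val r i) (val t) (Ordinal hi)) => b /=.
rewrite nth_index ?memL //; apply/eqP => hb; case/negP: hxt; rewrite -hb.
exact: imset_f.
Qed.

Local Close Scope ring_scope.
Lemma sum_count T (s : seq T) (P : pred T) : (\sum_(j <- s) (P j : nat))%N = count P s.
Proof. elim: s => [|x s IH]; by rewrite ?big_nil ?big_cons ?IH. Qed.

Lemma count_enum_sum n (A : {set 'I_n}) (P : pred 'I_n) :
  count P (enum A) = (\sum_(y in A) (P y : nat))%N.
Proof. by rewrite -sum_count big_enum. Qed.

Definition Phi0 n (c : {set 'I_n}) : nat :=
  (\sum_(x in c) \sum_(y in ~: c) (y < x)%N)%N.

Lemma sigma_eq k n (r : Sigma k n) :
  sigma r = (\sum_(j < k) \sum_(y in ~: rng r) (y < val r j)%N)%N.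
Proof.
rewrite /sigma map_cat inv_cat !inv_sorted ?add0n.
- rewrite big_map big_map big_enum /=; apply: eq_bigr => j _.
  by rewrite count_map /rstar count_enum_sum.
- by rewrite /rstar sorted_map; exact: sorted_enum_set.
- by rewrite sorted_map; exact: sig_seq_sorted.
Qed.

Lemma cntgt_eq k n (r : Sigma k n) i :
  count (fun x : 'I_n => (val r i < x)%N) (rstar r) = (\sum_(y in ~: rng r) (val r i < y)%N)%N.
Proof. by rewrite /rstar count_enum_sum. Qed.

Lemma sumD k n (r : Sigma k n) i (F : 'I_n -> nat) :
  (\sum_(y in ~: Dset r i) F y = F (val r i) + \sum_(y in ~: rng r) F y)%N.
Proof.
rewrite (bigD1 (val r i)) /=; last by rewrite !inE eqxx.
congr (_ + _)%N; apply: eq_bigl => y; rewrite !inE.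
case: (eqVneq y (val r i)) => [->|_] /=; last by rewrite andbT.
by have /= -> := rng_val r i.
Qed.

Lemma sum_lt_ord k (i : 'I_k) : (\sum_(j < k) (i < j)%N)%N = (k - i.+1)%N.
Proof.
rewrite -(big_mkord xpredT (fun j => (i < j)%N : nat)) sum_count.
by rewrite /index_iota subn0; exact: (count_geq (ltn_ord i)).
Qed.

Lemma nat_key k n (r : Sigma k n) (i : 'I_k) : (k <= n)%N ->
  (sigma r + count (fun x : 'I_n => (val r i < x)%N) (rstar r) + (k - i.+1)
   = Phi0 (Dset r i) + (n - k))%N.
Proof.
move=> hkn.
set F := fun x : 'I_n => (\sum_(y in ~: Dset r i) (y < x)%N)%N.
have hF x : F x = ((val r i < x)%N + \sum_(y in ~: rng r) (y < x)%N)%N.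
  by rewrite /F sumD.
have hb : (Phi0 (Dset r i) + F (val r i) = \sum_(j < k) F (val r j))%N.
  rewrite /Phi0 -(big_imset (h := val r) (A := 'I_k) F); last by move=> a b _ _; apply: sig_inj.
  rewrite -/(rng r) (bigD1 (val r i) (rng_val r i)) addnC; congr (_ + _)%N.
  by apply: eq_bigl => x; rewrite !inE andbC.
have hc : (\sum_(j < k) F (val r j) = (k - i.+1) + sigma r)%N.
  rewrite sigma_eq -sum_lt_ord -big_split /=; apply: eq_bigr => j _.
  by rewrite hF sig_ltn.
have hd : F (val r i) = (\sum_(y in ~: rng r) (y < val r i)%N)%N by rewrite hF ltnn.
have he : (\sum_(y in ~: rng r) (y < val r i)%N + \sum_(y in ~: rng r) (val r i < y)%N = n - k)%N.
  rewrite -big_split /= -(size_rstar r hkn) /rstar -cardE.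
  rewrite -sum1_card; apply: eq_bigr => y hy.
  case: (ltngtP y (val r i)) => //= /val_inj hyr.
  by move: hy; rewrite inE hyr rng_val.
rewrite cntgt_eq; move: hb hc hd he; rewrite -/(Phi0 (Dset r i)).
move: (Phi0 _) (F _) (sigma r) (\sum_(j < k) F _) => a b c d.
move: (\sum_(y in _) _)%N (\sum_(y in _) _)%N => e f; lia.
Qed.

Local Open Scope ring_scope.

Definition Hs (R : nzRingType) k n (c : {set 'I_n}) : R :=
  (-1) ^+ (Phi0 c + (n - k) + (k - 1)).

Lemma sign_key (R : nzRingType) k n (r : Sigma k n) (i : 'I_k) : (k <= n)%N ->
  (-1) ^+ sigma r * (-1) ^+ count (fun x : 'I_n => (val r i < x)%N) (rstar r)
   = (-1) ^+ i * Hs R k (Dset r i).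
Proof.
move=> hkn; have := nat_key r i hkn; rewrite /Hs -!exprD.
move: (sigma r) (count _ _) (Phi0 _) => a b c h.
have hi : (i < k)%N := ltn_ord i.
have -> : (i + (c + (n - k) + (k - 1)) = (a + b) + ((k - 1) + (k - 1)))%N by lia.
by rewrite [RHS]exprD [X in _ * X]exprD sgn_sq mulr1.
Qed.

Local Close Scope ring_scope.
Local Open Scope ring_scope.
Definition Ert (R : comNzRingType) k n (r : Sigma k n) (i : 'I_k) (t : Sigma (n - k + 1) n) : R :=
  Emat R (rcons (rstar r) (val r i)) (val r i) t.

Lemma keyC (R : comNzRingType) k n (r r' : Sigma k n) (i j : 'I_k) :
  (1 <= k)%N -> (k <= n)%N ->
  (-1) ^+ sigma r * (-1) ^+ sigma r' *
    \sum_(t : Sigma (n - k + 1) n) (Ert R r i t * Ert R r' j t)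
  = (-1) ^+ (i + j) * (Dset r i == Dset r' j)%:R.
Proof.
move=> h1 h2.
have step t : (-1) ^+ sigma r * (-1) ^+ sigma r' * (Ert R r i t * Ert R r' j t)
   = (-1) ^+ (i + j) * ((~: Dset r i == rng t) && (~: Dset r' j == rng t))%:R.
  rewrite /Ert !E_val //.
  case: (eqVneq (~: Dset r i) (rng t)) => [e1|]; last by rewrite /= !(mul0r, mulr0).
  case: (eqVneq (~: Dset r' j) (rng t)) => [e2|]; last by rewrite /= ?andbF !(mul0r, mulr0).
  have eD : Dset r i = Dset r' j by apply: setC_inj; rewrite e1 e2.
  rewrite /= mulr1.
  rewrite mulrACA !sign_key // eD mulrACA sgn_sq mulr1 exprD //.
rewrite mulr_sumr (eq_bigr _ (fun t _ => step t)) -mulr_sumr; congr (_ * _).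
case: (eqVneq (Dset r i) (Dset r' j)) => [e|ne].
  rewrite -e /=.
  have -> : \sum_(t : Sigma (n - k + 1) n) ((~: Dset r i == rng t) && (~: Dset r i == rng t))%:R
     = \sum_(t : Sigma (n - k + 1) n) ((~: Dset r i == rng t)%:R : R).
    by apply: eq_bigr => t _; rewrite andbb.
  by rewrite (count_rng _ (val r i)) // card_CD.
rewrite big1 // => t _; case: (eqVneq (~: Dset r i) (rng t)) => [e1|//].
case: (eqVneq (~: Dset r' j) (rng t)) => [e2|//].
by case/eqP: ne; apply: setC_inj; rewrite e1 e2.
Qed.

Lemma prodD (R : comNzRingType) k n (r : Sigma k n) i (F : 'I_n -> R) :
  \prod_(y in ~: Dset r i) F y = F (val r i) * \prod_(y in ~: rng r) F y.
Proof.
rewrite (bigD1 (val r i)) /=; last by rewrite !inE eqxx.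
congr (_ * _); apply: eq_bigl => y; rewrite !inE.
case: (eqVneq y (val r i)) => [->|_] /=; last by rewrite andbT.
by have /= -> := rng_val r i.
Qed.

Lemma wlam (R : comNzRingType) k n (lam : 'I_n -> R) (r : Sigma k n) i :
  lamstar lam r * lam (val r i) = lamS lam (~: Dset r i).
Proof. by rewrite /lamS prodD /lamstar /lamS mulrC. Qed.

Lemma wprod (R : rcfType) k n (lam : 'I_n -> R) (hlam : forall i, 0 <= lam i)
  (r r' : Sigma k n) i j : Dset r i = Dset r' j ->
  Num.sqrt (lamstar lam r * lam (val r i)) * Num.sqrt (lamstar lam r' * lam (val r' j))
  = lamstar lam r * lam (val r i).
Proof.
move=> e; rewrite !wlam e -expr2 sqr_sqrtr //.
by apply: prodr_ge0 => x _.
Qed.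

Local Close Scope ring_scope.
Local Open Scope ring_scope.
Lemma Pst_uniq k n (r r' : Sigma k n) p q : Pst r r' p -> Pst r r' q -> p = q.
Proof.
move=> /andP[/eqP a1 /eqP a2] /andP[/eqP b1 /eqP b2].
rewrite a1 in b1; rewrite a2 in b2.
move/set1_inj/sig_inj: b1; move/set1_inj/sig_inj: b2.
by case: p {a1 a2} => p1 p2; case: q => q1 q2 /= -> ->.
Qed.

Definition wr (R : rcfType) k n (lam : 'I_n -> R) (r : Sigma k n) i : R :=
  Num.sqrt (lamstar lam r * lam (val r i)).

Definition gg (R : rcfType) k n (a : Sigma k n -> R) (lam : 'I_n -> R)
  (r : Sigma k n) (i : 'I_k) (r' : Sigma k n) (j : 'I_k) : R :=
  a r * a r' * (wr lam r i * wr lam r' j) * ((-1) ^+ (i + j) * (Dset r i == Dset r' j)%:R).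

Lemma rowlemma (R : rcfType) k n (a : Sigma k n -> R) (lam0 : R) (lam : 'I_n -> R)
  (hlam : forall i, 0 <= lam i) (r : Sigma k n) :
  \sum_(rt : Sigma k n) a r * a rt * mentry lam0 lam r rt
  = lam0 * (a r ^+ 2 * lamstar lam r) +
    \sum_(i < k) \sum_(r' : Sigma k n) \sum_(j < k) gg a lam r i r' j.
Proof.
rewrite [X in _ = _ + X]exchange_big /=.
rewrite (bigD1 r) //= [X in _ = _ + X](bigD1 r) //= addrA; congr (_ + _).
  rewrite /mentry eqxx.
  have -> : \sum_(i < k) \sum_(j < k) gg a lam r i r j
      = a r * a r * lamstar lam r * \sum_(i < k) lam (val r i).
    rewrite mulr_sumr; apply: eq_bigr => i _.
    rewrite (bigD1 i) //= big1 ?addr0; last first.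
      by move=> j hj; rewrite /gg D_eq_ij eq_sym (negbTE hj) mulr0 mulr0.
    by rewrite /gg eqxx /wr wprod // exprD sgn_sq mul1r mulr1 !mulrA.
  move: (\sum_(i < k) lam (val r i)) => S; move: (a r) (lamstar lam r) => x y; ring.
apply: eq_bigr => r' hr'.
rewrite /mentry eq_sym (negbTE hr').
have hne : r != r' by rewrite eq_sym.
rewrite pair_bigA /=.
case: pickP => [st hst|hn].
  rewrite (bigD1 st) //= big1 ?addr0; last first.
    move=> p hp; rewrite /gg D_off //.
    case: (boolP (Pst r r' (p.1, p.2))) => [hP|_]; last by rewrite mulr0 mulr0.
    by case/eqP: hp; rewrite -(Pst_uniq hP hst); case: p {hP}.
  have hP : Pst r r' (st.1, st.2) by case: st hst.
  rewrite /gg D_off // hP /wr wprod //; last by apply/eqP; rewrite D_off.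
  rewrite mulr1; ring.
rewrite mulr0 big1 // => p _; rewrite /gg D_off //.
have : Pst r r' (p.1, p.2) = false by case: p => p1 p2; exact: hn.
by move=> ->; rewrite !mulr0.
Qed.

Local Close Scope ring_scope.
Local Open Scope ring_scope.
Theorem lemma3p7 (R : rcfType) (n k : nat) (hk1 : (1 <= k)%N) (hkn : (k <= n)%N)
  (a : Sigma k n -> R) (lam0 : R) (lam : 'I_n -> R)
  (hlam0 : 0 <= lam0) (hlam : forall i, 0 <= lam i)
  (B : 'M[R]_n) (hB : B *m B^T = 1%:M) :
  \sum_(r : Sigma k n) \sum_(rt : Sigma k n) a r * a rt * mentry lam0 lam r rt
    = lam0 * \sum_(r : Sigma k n) a r ^+ 2 * lamstar lam r
      + altdot B (theta B lam a) (theta B lam a)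
  /\ 0 <= \sum_(r : Sigma k n) \sum_(rt : Sigma k n) a r * a rt * mentry lam0 lam r rt.
Proof.
pose X (p : Sigma k n * 'I_k) : R := (-1) ^+ sigma p.1 * a p.1 * wr lam p.1 p.2.
have hA (t : Sigma (n - k + 1) n) :
    theta B lam a (fun b => row (val t b) B) = \sum_p X p * Ert R p.1 p.2 t.
  rewrite /theta -(pair_bigA _ (fun r i => X (r, i) * Ert R r i t)) /=.
  apply: eq_bigr => r _; rewrite mulr_sumr; apply: eq_bigr => i _.
  rewrite (wedge_E hB (val r i)); last by rewrite size_rcons size_rstar // addn1.
  by rewrite /X /Ert /wr /= mulrA.
have hB2 : altdot B (theta B lam a) (theta B lam a)
    = \sum_p \sum_q X p * X q * \sum_(t : Sigma (n - k + 1) n) (Ert R p.1 p.2 t * Ert R q.1 q.2 t).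
  rewrite /altdot.
  under eq_bigr => t _ do rewrite hA mulr_suml.
  under eq_bigr => t _ do under eq_bigr => p _ do rewrite mulr_sumr.
  rewrite exchange_big /=; apply: eq_bigr => p _.
  rewrite exchange_big /=; apply: eq_bigr => q _.
  rewrite mulr_sumr; apply: eq_bigr => t _.
  by rewrite mulrACA.
have EQ : \sum_(r : Sigma k n) \sum_(rt : Sigma k n) a r * a rt * mentry lam0 lam r rt
    = lam0 * \sum_(r : Sigma k n) a r ^+ 2 * lamstar lam r
      + altdot B (theta B lam a) (theta B lam a).
  rewrite (eq_bigr _ (fun r _ => rowlemma a lam0 hlam r)) big_split /= -mulr_sumr.
  congr (_ + _); rewrite hB2 pair_bigA /=; apply: eq_bigr => p _.
  rewrite pair_bigA /=; apply: eq_bigr => q _.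
  rewrite /gg -(keyC R p.1 q.1 p.2 q.2 hk1 hkn) /X /=.
  move: (\sum_(t : Sigma (n - k + 1) n) _) => S.
  move: ((-1) ^+ sigma p.1) ((-1) ^+ sigma q.1) (wr lam p.1 p.2) (wr lam q.1 q.2) (a p.1) (a q.1) => s1 s2 w1 w2 x1 x2.
  ring.
split; first exact: EQ.
rewrite EQ; apply: addr_ge0.
  apply: mulr_ge0 => //; apply: sumr_ge0 => r _; apply: mulr_ge0; first exact: sqr_ge0.
  by apply: prodr_ge0 => x _.
by apply: sumr_ge0 => t _; rewrite -expr2 sqr_ge0.
Qed.
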